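(* With the maps $\mathrm{Tr}_1:H(m,1,1)\to\mathcal{A}_m$ and $\mathrm{Tr}_2:H(m,1,2)\to H(m,1,1)$ defined below, for all integers $a$ and $b$, $$\mathrm{Tr}_1\bigl(\mathrm{Tr}_2(\sigma_1^{-1}\tau^a\sigma_1\tau^b\sigma_1)\bigr)=D\,\mu_{a+b},$$ where $\mu_c:=\mathrm{Tr}_1(\tau^c)$ for $c\in\mathbb{Z}$.
   Context: $\mathcal{A}_m:=\mathbb{C}[q^{\pm1},v_1^{\pm1},\dots,v_m^{\pm1}]$ for finite $m$, $\mathcal{A}_\infty:=\mathbb{C}[q,q^{-1}]$; $\mathfrak{E}_m:=\{0,\dots,m-1\}$ for finite $m$, $\mathfrak{E}_\infty:=\mathbb{Z}$. $H(m,1,k)$ is the $\mathcal{A}_m$-algebra generated by $\tau,\tau^{-1},\sigma_1,\dots,\sigma_{k-1}$ subject to $\tau\tau^{-1}=\tau^{-1}\tau=1$, braid relations for the $\sigma_i$, $\tau\sigma_1\tau\sigma_1=\sigma_1\tau\sigma_1\tau$, $\tau\sigma_i=\sigma_i\tau$ ($i>1$), $\sigma_i^2=(q-q^{-1})\sigma_i+1$, and $(\tau-v_1)\cdots(\tau-v_m)=0$ if $m<\infty$; $H(m,1,0)=\mathcal{A}_m$ and $H(m,1,1)\subset H(m,1,2)$ is the subalgebra generated by $\tau^{\pm1}$. Fix $D\in\mathcal{A}_m$ and $\mu_a\in\mathcal{A}_m$ ($a\in\mathfrak{E}_m\setminus\{0\}$), $\mu_0:=1$. $\mathrm{Tr}_1$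 is the $\mathcal{A}_m$-linear map on $H(m,1,1)$ (basis $\tau^a$, $a\in\mathfrak{E}_m$) with $\mathrm{Tr}_1(\tau^a)=\mu_a$. $\mathrm{Tr}_2$ is the $\mathcal{A}_m$-linear map $H(m,1,2)\to H(m,1,1)$ defined on the basis $\tau^a\sigma_1u$ and $\sigma_1^{-1}\tau^a\sigma_1u$ ($a\in\mathfrak{E}_m$, $u$ in a basis of $H(m,1,1)$) by $\mathrm{Tr}_2(\tau^a\sigma_1u)=D\tau^au$ and $\mathrm{Tr}_2(\sigma_1^{-1}\tau^a\sigma_1u)=\mu_au$. *)

(* Defs.v *)
From HB Require Import structures.
From mathcomp Require Import all_boot all_order all_algebra.
Set Implicit Arguments. Unset Strict Implicit. Unset Printing Implicit Defensive.
Import Order.TTheory GRing.Theory Num.Theory.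
Local Open Scope ring_scope.

(* m : option nat;  Some n  is the finite case m = n,  None  is m = infinity. *)

Definition in_Em (m : option nat) (a : int) : bool :=
  if m is Some n then (0 <= a) && (a < n%:Z) else true.

Definition zpow (A : nzRingType) (x xi : A) (a : int) : A :=
  match a with
  | Posz n => x ^+ n
  | Negz n => xi ^+ n.+1
  end.

Definition is_basis (R : nzRingType) (V : lmodType R) (I : eqType)
    (P : pred I) (f : I -> V) : Prop :=
  (forall x : V, exists (s : seq I) (c : I -> R),
      all P s /\ x = \sum_(i <- s) c i *: f i) /\
  (forall (s : seq I) (c : I -> R), uniq s -> all P s ->
      \sum_(i <- s) c i *: f i = 0 -> forall i, i \in s -> c i = 0).

Definition cyclo_rel (R : comNzRingType) (A : algType R) (m : option nat)
    (v : nat -> R) (t : A) : Prop :=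
  if m is Some n then \prod_(i < n) (t - (v i.+1)%:A) = 0 else True.

(* Main.v *)
Require Import Defs.
From HB Require Import structures.
From mathcomp Require Import all_boot all_order all_algebra.
From mathcomp Require Import zify ring.
Import Order.TTheory GRing.Theory Num.Theory.
Local Open Scope ring_scope.



Lemma intdecomp (z : int) : exists m n : nat, z = m%:Z - n%:Z.
Proof. case: z => n; [exists n, 0%N | exists 0%N, n.+1]; by rewrite ?subr0 ?sub0r. Qed.

Lemma zpowB (A : nzRingType) (x xi : A) : x * xi = 1 -> xi * x = 1 ->
  forall m n : nat, zpow x xi (m%:Z - n%:Z) = x ^+ m * xi ^+ n.
Proof.
move=> h1 h2 m n.
have cx : GRing.comm x xi by rewrite /GRing.comm h1 h2.
have e k : x ^+ k * xi ^+ k = 1 by rewrite -exprMn_comm // h1 expr1n.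
case: (leqP n m) => hnm.
  rewrite subzn //= -[in RHS](subnK hnm) exprD -mulrA e mulr1 //.
have -> : m%:Z - n%:Z = - (n - m)%N%:Z by rewrite -subzn ?opprB // ltnW.
have hk : (0 < n - m)%N by rewrite subn_gt0.
case E: (n - m)%N hk => [//|k] _ /=.
by rewrite -E -[in RHS](subnK (ltnW hnm)) addnC exprD mulrA e mul1r.
Qed.

Lemma zpowD (A : nzRingType) (x xi : A) : x * xi = 1 -> xi * x = 1 ->
  forall a b, zpow x xi (a + b) = zpow x xi a * zpow x xi b.
Proof.
move=> h1 h2 a b.
have cx : GRing.comm xi x by rewrite /GRing.comm h1 h2.
case: (intdecomp a) => m1 [n1 ->]; case: (intdecomp b) => m2 [n2 ->].
have -> : m1%:Z - n1%:Z + (m2%:Z - n2%:Z) = (m1 + m2)%N%:Z - (n1 + n2)%N%:Z.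
  by rewrite !PoszD; ring.
rewrite !zpowB // !exprD -!mulrA; congr (_ * _); rewrite !mulrA; congr (_ * _).
have cc : GRing.comm (x ^+ m2) (xi ^+ n1).
  by apply: commrX; apply: commr_sym; apply: commrX.
exact: cc.
Qed.

Lemma zpow_comm (A : nzRingType) (x xi y : A) : x * xi = 1 -> xi * x = 1 ->
  x * y = y * x -> xi * y = y * xi -> forall a, zpow x xi a * y = y * zpow x xi a.
Proof.
move=> h1 h2 c1 c2 a; case: (intdecomp a) => m [n ->]; rewrite zpowB //.
have d1 : GRing.comm y (x ^+ m) by apply: commrX.
have d2 : GRing.comm y (xi ^+ n) by apply: commrX.
by rewrite -mulrA -d2 mulrA -d1 mulrA.
Qed.

Lemma zpow0 (A : nzRingType) (x xi : A) : zpow x xi 0 = 1. Proof. by []. Qed.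
Lemma zpow1 (A : nzRingType) (x xi : A) : zpow x xi 1 = x. Proof. by rewrite /= expr1. Qed.



Lemma E1 (R : comNzRingType) (A : algType R) (t ti s si : A) (c : R) :
 t * ti = 1 -> ti * t = 1 -> s * si = 1 -> si * s = 1 ->
 t * s * t * s = s * t * s * t -> s * s = c *: s + 1 ->
 forall a z, t * (si * zpow t ti a * s * zpow t ti z) =
   c *: (t * s * zpow t ti (a + z)) + si * zpow t ti a * s * zpow t ti (z + 1)
   - c *: (zpow t ti (a + 1) * s * zpow t ti z).
Proof.
move=> h1 h2 h3 h4 hb hq a z.
set Z := zpow t ti.
have hJ : t * (s * t * s) = (s * t * s) * t by rewrite !mulrA.
have hJi : ti * (s * t * s) = (s * t * s) * ti.
  by rewrite -[LHS]mulr1 -h1 mulrA -(mulrA ti) -hJ !mulrA h2 mul1r.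
have hJa : Z a * (s * t * s) = (s * t * s) * Z a by apply: zpow_comm.
have K1 : si * Z a * s * t * s = t * s * Z a.
  by have := congr1 (fun X => si * X) hJa; rewrite /= !mulrA h4 mul1r.
have hsi : si = s - c%:A.
  have e : si * (s * s) = s by rewrite mulrA h4 mul1r.
  rewrite hq mulrDr mulr1 -scalerAr h4 in e.
  by rewrite -e addrAC subrr add0r.
have hZ1 : forall b, Z (b + 1) = Z b * t by move=> b; rewrite /Z zpowD // zpow1.
have ht : forall b, t * Z b = Z b * t.
  by move=> b; symmetry; apply: zpow_comm => //; rewrite h1 h2.
have M : t * si * Z a * s = c *: (t * s * Z a) + si * Z a * s * t - c *: (Z (a + 1) * s).
  have e1 : t * s * Z a * s = c *: (t * s * Z a) + si * Z a * s * t.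
    by rewrite -[in LHS]K1 -[X in X = _]mulrA hq mulrDr mulr1 -scalerAr K1.
  rewrite [in LHS]hsi mulrBr mulrBl mulrBl e1 hZ1 -ht.
  by rewrite mulr_algr -!scalerAl.
have hZD : Z (a + z) = Z a * Z z by rewrite /Z zpowD.
rewrite hZD hZ1 -ht !mulrA M !mulrBl !mulrDl -!scalerAl ?mulrA.
done.
Qed.



Lemma RED (R : comUnitRingType) (m : option nat) (v : nat -> R) :
  (forall i, (0 < i)%N -> (if m is Some n then (i <= n)%N else false) ->
     v i \is a GRing.unit) ->
  forall x : int, exists (sq : seq int) (p : int -> R), all (in_Em m) sq /\
   forall (A : algType R) (u ui : A), u * ui = 1 -> ui * u = 1 ->
     cyclo_rel m v u ->
     zpow u ui x = \sum_(j <- sq) p j *: zpow u ui j.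
Proof.
case: m => [n|] hv x; last first.
  exists [:: x], (fun _ => 1); split => // A u ui _ _ _.
  by rewrite big_seq1 scale1r.
pose P : {poly R} := \prod_(i < n) ('X - (v i.+1)%:P).
have monP : P \is monic by apply: monic_prod_XsubC.
have szP : size P = n.+1 by rewrite size_prod_XsubC -[index_enum _]enumT size_enum_ord.
have P0u : P.[0] \is a GRing.unit.
  rewrite horner_prod; apply: unitr_prod => i _.
  by rewrite hornerXsubC sub0r unitrN; apply: hv.
have [q hq] : exists q, P - (P.[0])%:P = q * ('X - 0%:P).
  by apply/factor_theorem; rewrite /root hornerD hornerN hornerC subrr.
pose W := - (P.[0])^-1 *: q.
pose E := match x with Posz k => 'X^k | Negz k => W ^+ k.+1 end.
pose r := Pdiv.Ring.rmodp E P.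
have szr : (size r <= n)%N.
  by rewrite -ltnS -szP Pdiv.Ring.ltn_rmodp monic_neq0.
have rE : r = \poly_(i < n) r`_i.
  apply/polyP => i; rewrite coef_poly; case: ltnP => // h.
  by rewrite nth_default // (leq_trans szr h).
exists [seq Posz i | i <- iota 0 n], (fun j => r`_(absz j)); split.
  apply/allP => j /mapP [i]; rewrite mem_iota => /andP[_ hi] ->.
  by rewrite /in_Em /= ltz_nat hi.
move=> A u ui hu1 hu2 hcyc.
pose h := horner_alg u.
have hP : horner_alg u P = 0.
  rewrite rmorph_prod -[RHS]hcyc; apply: eq_bigr => i _.
  by rewrite rmorphB /= horner_algX horner_algC.
have hW : h W = ui.
  rewrite polyC0 subr0 in hq.
  have e := congr1 h hq; rewrite /h in e.
  rewrite !rmorphB rmorphM /= hP sub0r horner_algX in e.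
  rewrite horner_algC in e.
  rewrite /h.
  have hq' : horner_alg u q = - (P.[0] *: ui).
    by rewrite -[horner_alg u q]mulr1 -hu1 mulrA -e mulNr mulr_algl.
  by rewrite /W linearZ /= hq' mulr_algl scalerN scaleNr opprK scalerA mulVr // scale1r.
have hE : h E = zpow u ui x.
  rewrite /h /E; case: x {E r szr rE} => k /=; rewrite rmorphXn /=.
    by rewrite horner_algX.
  by rewrite -/h hW.
rewrite -hE /h (Pdiv.RingMonic.rdivp_eq monP E) rmorphD rmorphM /= hP mulr0 add0r.
rewrite -/r [in LHS]rE poly_def linear_sum /= big_map.
have -> : iota 0 n = index_iota 0 n by rewrite /index_iota subn0.
rewrite big_mkord; apply: eq_bigr => i _.
by rewrite linearZ /= rmorphXn /= mulr_algl horner_algX.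
Qed.



Lemma lin_sum (R : comNzRingType) (V : lmodType R) (L : V -> R) :
  (forall a u w, L (a *: u + w) = a * L u + L w) ->
  forall (sq : seq int) (p : int -> R) (y : int -> V),
  L (\sum_(j <- sq) p j *: y j) = \sum_(j <- sq) p j * L (y j).
Proof.
move=> hL sq p y.
have L0 : L 0 = 0.
  by have := hL (-1) 0 0; rewrite scaler0 addr0 mulN1r addNr.
elim: sq => [|j sq IH]; first by rewrite !big_nil.
by rewrite !big_cons hL IH.
Qed.

Lemma ext_lin (R : comUnitRingType) (m : option nat) (v : nat -> R) :
  (forall i, (0 < i)%N -> (if m is Some n then (i <= n)%N else false) ->
     v i \is a GRing.unit) ->
  forall (A1 A2 : algType R) (u1 ui1 : A1) (u2 ui2 : A2),
  u1 * ui1 = 1 -> ui1 * u1 = 1 -> cyclo_rel m v u1 ->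
  u2 * ui2 = 1 -> ui2 * u2 = 1 -> cyclo_rel m v u2 ->
  forall (L1 : A1 -> R) (L2 : A2 -> R),
  (forall a u w, L1 (a *: u + w) = a * L1 u + L1 w) ->
  (forall a u w, L2 (a *: u + w) = a * L2 u + L2 w) ->
  (forall j, in_Em m j -> L1 (zpow u1 ui1 j) = L2 (zpow u2 ui2 j)) ->
  forall x, L1 (zpow u1 ui1 x) = L2 (zpow u2 ui2 x).
Proof.
move=> hv A1 A2 u1 ui1 u2 ui2 h1 h2 h3 h4 h5 h6 L1 L2 l1 l2 hb x.
have [sq [p [hall hrep]]] := @RED R m v hv x.
rewrite (hrep _ u1 ui1) // (hrep _ u2 ui2) // !lin_sum //.
apply: eq_big_seq => j hj; rewrite hb //.
exact: (allP hall).
Qed.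



Theorem mainTheorem9
  (R : comUnitRingType) (m : option nat) (q : R) (v : nat -> R)
  (D : R) (mu : int -> R)
  (H1 : algType R) (t1 t1i : H1)
  (H2 : algType R) (t ti s si : H2)
  (Tr1 : {linear H1 -> R^o}) (Tr2 : {linear H2 -> H1}) :
  q \is a GRing.unit ->
  (forall i, (0 < i)%N -> (if m is Some n then (i <= n)%N else false) ->
     v i \is a GRing.unit) ->
  t1 * t1i = 1 -> t1i * t1 = 1 -> cyclo_rel m v t1 ->
  is_basis (in_Em m) (zpow t1 t1i) ->
  t * ti = 1 -> ti * t = 1 -> s * si = 1 -> si * s = 1 ->
  t * s * t * s = s * t * s * t ->
  s * s = (q - q^-1) *: s + 1 ->
  cyclo_rel m v t ->
  is_basis (fun x : bool * int * int => in_Em m x.1.2 && in_Em m x.2)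
    (fun x : bool * int * int =>
       if x.1.1 then zpow t ti x.1.2 * s * zpow t ti x.2
       else si * zpow t ti x.1.2 * s * zpow t ti x.2) ->
  mu 0 = 1 ->
  (forall a, in_Em m a -> Tr1 (zpow t1 t1i a) = mu a) ->
  (forall a b, in_Em m a -> in_Em m b ->
     Tr2 (zpow t ti a * s * zpow t ti b) = D *: zpow t1 t1i (a + b)) ->
  (forall a b, in_Em m a -> in_Em m b ->
     Tr2 (si * zpow t ti a * s * zpow t ti b) = mu a *: zpow t1 t1i b) ->
  forall a b : int,
    Tr1 (Tr2 (si * zpow t ti a * s * zpow t ti b * s))
    = D * Tr1 (zpow t1 t1i (a + b)).
Proof.
move=> _ hv ht1 ht1' hcyc1 _ ht ht' hs hs' hbr hquad hcyc _ _ hTr1 hTr2a hTr2b a b.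
set c := q - q^-1.
set Z := zpow t ti.
set Z1 := zpow t1 t1i.
pose mu' x := Tr1 (Z1 x).
pose th y := Tr1 (Tr2 y).
have thD : forall u w, th (u + w) = th u + th w by move=> u w; rewrite /th !linearD.
have thB : forall u w, th (u - w) = th u - th w by move=> u w; rewrite /th !linearB.
have thZ : forall k u, th (k *: u) = k * th u by move=> k u; rewrite /th !linearZ.
have tr1Z : forall k u, Tr1 (k *: u) = k * Tr1 u by move=> k u; rewrite linearZ.
have tr1D : forall u w, Tr1 (u + w) = Tr1 u + Tr1 w by move=> u w; rewrite linearD.
have T1 : forall x z, th (Z x * s * Z z) = D * mu' (x + z).
  move=> x z; rewrite /mu' /Z1 zpowD //.
  apply: (@ext_lin R m v hv _ _ t ti t1 t1i ht ht' hcyc ht1 ht1' hcyc1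
     (fun X => th (X * s * Z z)) (fun X => D * Tr1 (X * Z1 z))).
  - by move=> k u w; rewrite /= !mulrDl -!scalerAl thD thZ.
  - by move=> k u w; rewrite /= !mulrDl -!scalerAl tr1D tr1Z; ring.
  move=> j hj /=.
  apply: (@ext_lin R m v hv _ _ t ti t1 t1i ht ht' hcyc ht1 ht1' hcyc1
     (fun X => th (Z j * s * X)) (fun X => D * Tr1 (Z1 j * X))).
  - by move=> k u w; rewrite /= !mulrDr -!scalerAr thD thZ.
  - by move=> k u w; rewrite /= !mulrDr -!scalerAr tr1D tr1Z; ring.
  move=> k hk /=.
  by rewrite /th hTr2a // tr1Z /Z1 (@zpowD _ _ _ ht1 ht1').
have T2 : forall x z, th (si * Z x * s * Z z) = mu' x * mu' z.
  move=> x z; rewrite /mu'.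
  apply: (@ext_lin R m v hv _ _ t ti t1 t1i ht ht' hcyc ht1 ht1' hcyc1
     (fun X => th (si * X * s * Z z)) (fun X => Tr1 X * Tr1 (Z1 z))).
  - by move=> k u w; rewrite /= !mulrDr !mulrDl -!scalerAr -!scalerAl thD thZ.
  - by move=> k u w; rewrite /= tr1D tr1Z; ring.
  move=> j hj /=.
  apply: (@ext_lin R m v hv _ _ t ti t1 t1i ht ht' hcyc ht1 ht1' hcyc1
     (fun X => th (si * Z j * s * X)) (fun X => Tr1 (Z1 j) * Tr1 X)).
  - by move=> k u w; rewrite /= !mulrDr -!scalerAr thD thZ.
  - by move=> k u w; rewrite /= tr1D tr1Z; ring.
  move=> k hk /=.
  by rewrite /th hTr2b // tr1Z /Z1 (hTr1 j hj).
have hsi : si = s - c%:A.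
  have e : si * (s * s) = s by rewrite mulrA hs' mul1r.
  rewrite hquad mulrDr mulr1 -scalerAr hs' in e.
  by rewrite -e addrAC subrr add0r.
have hsE : s = si + c%:A by rewrite hsi subrK.
pose f a0 b0 z := th (si * Z a0 * si * Z b0 * s * Z z).
have rec : forall a0 b0 z, f (a0 + 1) b0 z = c * (mu' (a0 + 1) * mu' (b0 + z))
    + f a0 b0 (z + 1) - c * (mu' (a0 + b0 + 1) * mu' z).
  move=> a0 b0 z.
  have e := @E1 _ _ t ti s si (q - q^-1) ht ht' hs hs' hbr hquad b0 z.
  have eq : si * Z (a0 + 1) * si * Z b0 * s * Z z = c *: (si * Z (a0 + 1) * s * Z (b0 + z))
      + si * Z a0 * si * Z b0 * s * Z (z + 1) - c *: (si * Z (a0 + b0 + 1) * s * Z z).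
    rewrite /Z (@zpowD _ _ _ ht ht' a0 1) zpow1 -(addrA a0 b0 1) (@zpowD _ _ _ ht ht' a0 (b0 + 1)).
    transitivity (si * zpow t ti a0 * (t * (si * zpow t ti b0 * s * zpow t ti z))).
      by rewrite !mulrA.
    by rewrite e mulrBr mulrDr -!scalerAr !mulrA.
  by rewrite /f eq thB thD !thZ !T2.
have base : forall b0 z, f 0 b0 z = D * mu' (b0 + z) - c * (mu' b0 * mu' z).
  move=> b0 z.
  have hss : si * si = 1 - c *: si by rewrite [X in si * X]hsi mulrBr hs' mulr_algr.
  have eq : si * Z 0 * si * Z b0 * s * Z z = Z b0 * s * Z z - c *: (si * Z b0 * s * Z z).
    by rewrite /Z zpow0 mulr1 hss !mulrBl mul1r -!scalerAl.
  by rewrite /f eq thB thZ T1 T2.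
pose g (a0 N : int) (j : nat) := mu' (a0 + j%:Z + 1) * mu' (b + N - j%:Z - 1)
   - mu' (a0 + b + j%:Z + 1) * mu' (N - j%:Z - 1).
have L : forall k : nat, forall a0 z, f (a0 + k%:Z) b z
    = f a0 b (z + k%:Z) + c * \sum_(j < k) g a0 (z + k%:Z) j.
  elim=> [|k IH] a0 z; first by rewrite !addr0 big_ord0 mulr0 addr0.
  have -> : a0 + k.+1%:Z = (a0 + k%:Z) + 1 by lia.
  rewrite rec IH big_ord_recr /=.
  have -> : z + 1 + k%:Z = z + k.+1%:Z by lia.
  rewrite /g.
  have -> : b + (z + k.+1%:Z) - k%:Z - 1 = b + z by lia.
  have -> : z + k.+1%:Z - k%:Z - 1 = z by lia.
  have -> : a0 + k%:Z + b + 1 = a0 + b + k%:Z + 1 by lia.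
  ring.
have tel : forall a0 (k : nat), \sum_(j < k) g a0 (a0 + k%:Z) j
    = mu' (a0 + k%:Z) * mu' (a0 + b) - mu' a0 * mu' (a0 + b + k%:Z).
  move=> a0 k.
  pose h (i : nat) := mu' (a0 + i%:Z) * mu' (b + a0 + k%:Z - i%:Z).
  have e : forall j : 'I_k, g a0 (a0 + k%:Z) j = h j.+1 - h (k - j.+1)%N.
    move=> j; have hj := ltn_ord j; rewrite /g /h -subzn //.
    rewrite [X in _ - X = _]mulrC.
    congr (mu' _ * mu' _ - mu' _ * mu' _); lia.
  rewrite (eq_bigr _ (fun j _ => e j)) sumrB.
  have r : \sum_(j < k) h (k - j.+1)%N = \sum_(j < k) h j.
    rewrite (reindex_inj rev_ord_inj) /=; apply: eq_bigr => j _.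
    have hj := ltn_ord j; congr h; lia.
  rewrite r -sumrB -(big_mkord xpredT (fun j => h j.+1 - h j)) telescope_sumr //.
  rewrite /h; congr (mu' _ * mu' _ - mu' _ * mu' _); lia.
have F : forall a0, f a0 b 0 = D * mu' (a0 + b) - c * (mu' 0 * mu' (a0 + b)).
  case=> n.
    have T := tel 0 n; have := L n 0 0.
    rewrite !add0r in T *; rewrite base T => ->.
    rewrite (addrC b n); ring.
  have hk : Negz n + n.+1%:Z = 0 by rewrite NegzE addNr.
  have T := tel (Negz n) n.+1; have := L n.+1 (Negz n) (Negz n).
  rewrite hk in T *; rewrite base => E.
  rewrite (_ : f (Negz n) b 0 = D * mu' (b + Negz n) - c * (mu' b * mu' (Negz n))
     - c * \sum_(j < n.+1) g (Negz n) 0 j); last by rewrite E; ring.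
  rewrite T.
  have -> : Negz n + b + n.+1%:Z = b by rewrite NegzE; lia.
  rewrite (addrC b (Negz n)); ring.
have eq : si * Z a * s * Z b * s = si * Z a * si * Z b * s * Z 0 + c *: (si * Z (a + b) * s * Z 0).
  rewrite /Z zpow0 !mulr1 (@zpowD _ _ _ ht ht' a b).
  transitivity (si * zpow t ti a * (si + c%:A) * zpow t ti b * s); first by rewrite -hsE.
  by rewrite mulrDr mulrDl mulrDl mulr_algr -!scalerAl ?mulrA.
change (th (si * Z a * s * Z b * s) = D * mu' (a + b)).
rewrite eq thD thZ T2.
have := F a; rewrite /f => ->.
rewrite ?addr0; ring.
Qed.
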